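(* Let $\eta$ be a (sufficiently regular, e.g. classical) solution of the uniformly compressing curve-shortening flow described below, with $L(t)=L(\eta(t))$. Then (i) $\partial_t L=-L^{-3}\int_0^1\tilde\sigma\,|\partial_{ss}\eta|^2\,ds$; (ii) $\partial_{tt}\big(L(t)^2\big)\ge 0$.
   Context: $\mathbb S^1=\mathbb R/\mathbb Z$, $d\ge 2$, $L(\eta)=\int_0^1|\partial_s\eta|\,ds$. The uniformly compressing curve-shortening flow is: $\eta:[0,t^\ast)\times\mathbb S^1\to\mathbb R^d$ with, for each $t$, $\int_0^1\eta(t,s)\,ds=0$ and $|\partial_s\eta(t,s)|=L(t)>0$ for all $s$, satisfying $$\partial_t\eta=L(t)^{-2}\partial_s(\tilde\sigma\,\partial_s\eta),$$ where the function $\tilde\sigma(t,\cdot):\mathbb S^1\to\mathbb R$ satisfies, for all $(t,s)$, $$\partial_{ss}\tilde\sigma-L^{-2}\tilde\sigma|\partial_{ss}\eta|^2=-L^{-2}\int_0^1\tilde\sigma|\partial_{ss}\eta|^2\,ds,\qquad \int_0^1\tilde\sigma(t,s)\,ds=1.$$ *)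

(* Defs.v *)
From Stdlib Require Import Reals.
From Coquelicot Require Import Coquelicot.
Open Scope R_scope.

Fixpoint sumd (d : nat) (f : nat -> R) : R :=
  match d with O => 0 | S k => sumd k f + f k end.

(* Euclidean norm of a vector of R^d, represented by its components v 0 .. v (d-1). *)
Definition vnorm2 (d : nat) (v : nat -> R) : R := sumd d (fun i => v i ^ 2).
Definition vnorm (d : nat) (v : nat -> R) : R := sqrt (vnorm2 d v).

Definition in_time (tstar : Rbar) (t : R) : Prop := 0 < t /\ Rbar_lt t tstar.

Definition dt (f : R -> R -> R) : R -> R -> R := fun t s => Derive (fun u => f u s) t.
Definition ds (f : R -> R -> R) : R -> R -> R := fun t s => Derive (fun u => f t u) s.

Fixpoint Ck (k : nat) (tstar : Rbar) (f : R -> R -> R) : Prop :=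
  match k with
  | O => forall t s, in_time tstar t ->
           continuous (fun p : R * R => f (fst p) (snd p)) (t, s)
  | S k' =>
      (forall t s, in_time tstar t ->
         continuous (fun p : R * R => f (fst p) (snd p)) (t, s)) /\
      (forall t s, in_time tstar t ->
         ex_derive (fun u => f u s) t /\ ex_derive (fun u => f t u) s) /\
      Ck k' tstar (dt f) /\ Ck k' tstar (ds f)
  end.

Definition smooth (tstar : Rbar) (f : R -> R -> R) : Prop := forall k, Ck k tstar f.

(* 1-periodic in s: a function on S^1 = R/Z. *)
Definition periodic1 (f : R -> R -> R) : Prop := forall t s, f t (s + 1) = f t s.

(* Length of the curve eta(t) : S^1 -> R^d, eta given componentwise. *)
Definition curve_length (d : nat) (eta : nat -> R -> R -> R) (t : R) : R :=
  RInt (fun s => vnorm d (fun i => ds (eta i) t s)) 0 1.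

Definition curv2 (d : nat) (eta : nat -> R -> R -> R) (t s : R) : R :=
  vnorm2 d (fun i => ds (ds (eta i)) t s).

Definition UCCSF (d : nat) (tstar : Rbar) (eta : nat -> R -> R -> R)
    (sigma : R -> R -> R) : Prop :=
  let L := curve_length d eta in
  (forall i, (i < d)%nat -> smooth tstar (eta i) /\ periodic1 (eta i)) /\
  smooth tstar sigma /\ periodic1 sigma /\
  (forall t, in_time tstar t ->
     (forall i, (i < d)%nat -> RInt (fun s => eta i t s) 0 1 = 0) /\
     0 < L t /\
     (forall s, vnorm d (fun i => ds (eta i) t s) = L t) /\
     (forall i s, (i < d)%nat ->
        dt (eta i) t s =
        / (L t ^ 2) * Derive (fun u => sigma t u * ds (eta i) t u) s) /\
     (forall s,
        ds (ds sigma) t s - / (L t ^ 2) * sigma t s * curv2 d eta t s =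
        - / (L t ^ 2) * RInt (fun u => sigma t u * curv2 d eta t u) 0 1) /\
     RInt (fun s => sigma t s) 0 1 = 1).

(* Main.v *)
Require Import Defs.
From Stdlib Require Import Reals Lra Lia.
From Coquelicot Require Import Coquelicot.
Open Scope R_scope.

Lemma in_time_open tstar t : in_time tstar t ->
  exists del : posreal, forall u, Rabs (u - t) < del -> in_time tstar u.
Proof.
  intros [H0 H1]. destruct tstar as [b| |]; simpl in H1.
  - assert (Hp : 0 < Rmin t (b - t)) by (apply Rmin_glb_lt; lra).
    exists (mkposreal _ Hp). intros u Hu; simpl in Hu.
    pose proof (Rmin_l t (b-t)); pose proof (Rmin_r t (b-t)).
    apply Rabs_def2 in Hu. split; simpl; lra.
  - exists (mkposreal _ H0). intros u Hu; simpl in Hu.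
    apply Rabs_def2 in Hu. split; simpl; auto; lra.
  - contradiction.
Qed.

Lemma in_time_loc tstar t : in_time tstar t -> locally t (in_time tstar).
Proof.
  intros H. destruct (in_time_open _ _ H) as [del Hd]. exists del.
  intros u Hu. apply Hd. exact Hu.
Qed.

Lemma in_time_loc2 tstar t s : in_time tstar t ->
  locally (t, s) (fun p : R * R => in_time tstar (fst p)).
Proof.
  intros H. destruct (in_time_open _ _ H) as [del Hd]. exists del.
  intros [u v] [Hu Hv]. apply Hd. exact Hu.
Qed.

Lemma locally_2d_in_time tstar t s : in_time tstar t ->
  locally_2d (fun u v => in_time tstar u) t s.
Proof.
  intros H. destruct (in_time_open _ _ H) as [del Hd]. exists del.
  intros u v Hu Hv. apply Hd. exact Hu.
Qed.

Lemma Ck_cont k tstar f t s : Ck k tstar f -> in_time tstar t ->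
  continuous (fun p : R * R => f (fst p) (snd p)) (t, s).
Proof. destruct k; simpl; intros H Ht; [apply H | apply H]; auto. Qed.

Lemma Ck_S k tstar f : Ck (S k) tstar f -> Ck k tstar f.
Proof.
  revert f; induction k; intros f H.
  - simpl. apply H.
  - destruct H as [H1 [H2 [H3 H4]]]. split; [exact H1|]. split; [exact H2|].
    split; apply IHk; assumption.
Qed.

Lemma Ck_ext k tstar f g : (forall t s, in_time tstar t -> f t s = g t s) ->
  Ck k tstar f -> Ck k tstar g.
Proof.
  revert f g; induction k; intros f g Hfg H.
  - intros t s Ht. eapply continuous_ext_loc; [|apply (H t s Ht)].
    generalize (in_time_loc2 _ _ s Ht). apply filter_imp.
    intros [u v] Hu; simpl in *. now rewrite Hfg.
  - destruct H as [H1 [H2 [H3 H4]]].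
    assert (Hc : forall t s, in_time tstar t ->
       continuous (fun p : R * R => g (fst p) (snd p)) (t, s)).
    { intros t s Ht. eapply continuous_ext_loc; [|apply (H1 t s Ht)].
      generalize (in_time_loc2 _ _ s Ht). apply filter_imp.
      intros [u v] Hu; simpl in *. now rewrite Hfg. }
    split; [exact Hc|]. split.
    { intros t s Ht. destruct (H2 t s Ht) as [Ha Hb]. split.
      - eapply ex_derive_ext_loc; [|apply Ha].
        generalize (in_time_loc _ _ Ht). apply filter_imp. intros u Hu. now apply Hfg.
      - eapply ex_derive_ext; [|apply Hb]. intros v. now apply Hfg. }
    split.
    + apply (IHk (dt f)); [|exact H3]. intros t s Ht. unfold dt.
      apply Derive_ext_loc. generalize (in_time_loc _ _ Ht). apply filter_imp.
      intros u Hu. now apply Hfg.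
    + apply (IHk (ds f)); [|exact H4]. intros t s Ht. unfold ds.
      apply Derive_ext. intros v. now apply Hfg.
Qed.

Lemma Ck_plus k tstar f g : Ck k tstar f -> Ck k tstar g ->
  Ck k tstar (fun t s => f t s + g t s).
Proof.
  revert f g; induction k; intros f g Hf Hg.
  - intros t s Ht. apply (continuous_plus (fun p : R*R => f (fst p) (snd p))
       (fun p : R*R => g (fst p) (snd p))). apply Hf; exact Ht. apply Hg; exact Ht.
  - destruct Hf as [F1 [F2 [F3 F4]]]; destruct Hg as [G1 [G2 [G3 G4]]].
    split. { intros t s Ht. apply (continuous_plus (fun p : R*R => f (fst p) (snd p))
       (fun p : R*R => g (fst p) (snd p))). apply F1. exact Ht. apply G1; exact Ht. }
    split. { intros t s Ht. destruct (F2 t s Ht); destruct (G2 t s Ht).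
      split; [apply (ex_derive_plus (fun u => f u s) (fun u => g u s))|
              apply (ex_derive_plus (fun u => f t u) (fun u => g t u))]; assumption. }
    split.
    + apply (Ck_ext _ _ (fun t s => dt f t s + dt g t s)).
      2: (apply IHk; assumption).
      intros t s Ht; unfold dt; cbv beta; symmetry; apply Derive_plus.
      exact (proj1 (F2 t s Ht)). exact (proj1 (G2 t s Ht)).
    + apply (Ck_ext _ _ (fun t s => ds f t s + ds g t s)). 2: (apply IHk; assumption).
      intros t s Ht; unfold ds; cbv beta; symmetry; apply Derive_plus.
      exact (proj2 (F2 t s Ht)). exact (proj2 (G2 t s Ht)).
Qed.

Lemma Ck_mult k tstar f g : Ck k tstar f -> Ck k tstar g ->
  Ck k tstar (fun t s => f t s * g t s).
Proof.
  revert f g; induction k; intros f g Hf Hg.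
  - intros t s Ht. apply (continuous_mult (fun p : R*R => f (fst p) (snd p))
       (fun p : R*R => g (fst p) (snd p))). apply Hf; exact Ht. apply Hg; exact Ht.
  - pose proof (Ck_S _ _ _ Hf) as Hf'. pose proof (Ck_S _ _ _ Hg) as Hg'.
    destruct Hf as [F1 [F2 [F3 F4]]]; destruct Hg as [G1 [G2 [G3 G4]]].
    split. { intros t s Ht. apply (continuous_mult (fun p : R*R => f (fst p) (snd p))
       (fun p : R*R => g (fst p) (snd p))). apply F1. exact Ht. apply G1; exact Ht. }
    split. { intros t s Ht. destruct (F2 t s Ht); destruct (G2 t s Ht).
      split; [apply (ex_derive_mult (fun u => f u s) (fun u => g u s))|
              apply (ex_derive_mult (fun u => f t u) (fun u => g t u))]; assumption. }
    split.
    + apply (Ck_ext _ _ (fun t s => dt f t s * g t s + f t s * dt g t s)).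
      2: (apply Ck_plus; apply IHk; assumption).
      intros t s Ht; unfold dt; cbv beta; symmetry; apply (Derive_mult (fun u => f u s) (fun u => g u s) t).
      exact (proj1 (F2 t s Ht)). exact (proj1 (G2 t s Ht)).
    + apply (Ck_ext _ _ (fun t s => ds f t s * g t s + f t s * ds g t s)).
      2: (apply Ck_plus; apply IHk; assumption).
      intros t s Ht; unfold ds; cbv beta; symmetry; apply (Derive_mult (fun u => f t u) (fun u => g t u) s).
      exact (proj2 (F2 t s Ht)). exact (proj2 (G2 t s Ht)).
Qed.

Lemma smooth_dt tstar f : smooth tstar f -> smooth tstar (dt f).
Proof. intros H k. exact (proj1 (proj2 (proj2 (H (S k))))). Qed.
Lemma smooth_ds tstar f : smooth tstar f -> smooth tstar (ds f).
Proof. intros H k. exact (proj2 (proj2 (proj2 (H (S k))))). Qed.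
Lemma smooth_plus tstar f g : smooth tstar f -> smooth tstar g ->
  smooth tstar (fun t s => f t s + g t s).
Proof. intros Hf Hg k. apply Ck_plus; auto. Qed.
Lemma smooth_mult tstar f g : smooth tstar f -> smooth tstar g ->
  smooth tstar (fun t s => f t s * g t s).
Proof. intros Hf Hg k. apply Ck_mult; auto. Qed.
Lemma smooth_ext tstar f g : (forall t s, in_time tstar t -> f t s = g t s) ->
  smooth tstar f -> smooth tstar g.
Proof. intros E Hf k. apply (Ck_ext _ _ f); auto. Qed.

Lemma smooth_ex_dt tstar f t s : smooth tstar f -> in_time tstar t ->
  ex_derive (fun u => f u s) t.
Proof. intros H Ht. exact (proj1 (proj1 (proj2 (H 1%nat)) t s Ht)). Qed.
Lemma smooth_ex_ds tstar f t s : smooth tstar f -> in_time tstar t ->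
  ex_derive (fun u => f t u) s.
Proof. intros H Ht. exact (proj2 (proj1 (proj2 (H 1%nat)) t s Ht)). Qed.

Lemma smooth_cont2 tstar f t s : smooth tstar f -> in_time tstar t ->
  continuous (fun p : R * R => f (fst p) (snd p)) (t, s).
Proof. intros H Ht. exact (Ck_cont 0 _ _ _ _ (H O) Ht). Qed.

Lemma smooth_cont_s tstar f t s : smooth tstar f -> in_time tstar t ->
  continuous (fun v => f t v) s.
Proof.
  intros H Ht.
  apply (continuous_comp_2 (fun _ : R => t) (fun v : R => v) f).
  apply continuous_const. apply continuous_id.
  exact (smooth_cont2 _ _ _ _ H Ht).
Qed.

Lemma smooth_cont_t tstar f t s : smooth tstar f -> in_time tstar t ->
  continuous (fun u => f u s) t.
Proof.
  intros H Ht.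
  apply (continuous_comp_2 (fun u : R => u) (fun _ : R => s) f).
  apply continuous_id. apply continuous_const.
  exact (smooth_cont2 _ _ _ _ H Ht).
Qed.

Lemma smooth_schwarz tstar f t s : smooth tstar f -> in_time tstar t ->
  dt (ds f) t s = ds (dt f) t s.
Proof.
  intros H Ht. unfold dt, ds.
  apply Schwarz.
  - destruct (in_time_open _ _ Ht) as [del Hd]. exists del.
    intros u v Hu Hv. specialize (Hd u Hu).
    split; [apply (smooth_ex_dt _ _ _ _ H Hd)|].
    split; [apply (smooth_ex_ds _ _ _ _ H Hd)|].
    split; [apply (smooth_ex_dt _ (ds f) _ _ (smooth_ds _ _ H) Hd)|].
    apply (smooth_ex_ds _ (dt f) _ _ (smooth_dt _ _ H) Hd).
  - apply continuity_2d_pt_filterlim.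
    exact (smooth_cont2 _ _ _ _ (smooth_dt _ _ (smooth_ds _ _ H)) Ht).
  - apply continuity_2d_pt_filterlim.
    exact (smooth_cont2 _ _ _ _ (smooth_ds _ _ (smooth_dt _ _ H)) Ht).
Qed.

Lemma isd_plus (f g : R -> R) (x a b : R) : is_derive f x a -> is_derive g x b ->
  is_derive (fun y => f y + g y) x (a + b).
Proof. intros. apply (is_derive_plus f g x a b); auto. Qed.
Lemma isd_minus (f g : R -> R) (x a b : R) : is_derive f x a -> is_derive g x b ->
  is_derive (fun y => f y - g y) x (a - b).
Proof. intros. apply (is_derive_minus f g x a b); auto. Qed.
Lemma isd_mult (f g : R -> R) (x a b : R) : is_derive f x a -> is_derive g x b ->
  is_derive (fun y => f y * g y) x (a * g x + f x * b).
Proof. intros. apply (is_derive_mult f g x a b); auto. intros; apply Rmult_comm. Qed.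
Lemma isd_scal (f : R -> R) (k x a : R) : is_derive f x a ->
  is_derive (fun y => k * f y) x (k * a).
Proof. intros. apply is_derive_scal; auto. Qed.
Lemma isd_const (c x : R) : is_derive (fun _ : R => c) x 0.
Proof. apply (is_derive_const c x). Qed.
Lemma isd_ext (f g : R -> R) (x a : R) : (forall y, f y = g y) -> is_derive f x a -> is_derive g x a.
Proof. intros E H. eapply is_derive_ext; eauto. Qed.
Lemma isd_val (f : R -> R) (x a b : R) : is_derive f x a -> a = b -> is_derive f x b.
Proof. intros H ->; exact H. Qed.

Lemma sumd_ext d f g : (forall i, (i < d)%nat -> f i = g i) -> sumd d f = sumd d g.
Proof.
  induction d; simpl; intros H; auto. rewrite IHd, H; auto.
Qed.
Lemma sumd_plus d f g : sumd d (fun i => f i + g i) = sumd d f + sumd d g.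
Proof. induction d; simpl; [ring|]. rewrite IHd; ring. Qed.
Lemma sumd_scal d k f : sumd d (fun i => k * f i) = k * sumd d f.
Proof. induction d; simpl; [ring|]. rewrite IHd; ring. Qed.
Lemma sumd_zero d : sumd d (fun _ => 0) = 0.
Proof. induction d; simpl; [ring|]. rewrite IHd; ring. Qed.
Lemma sumd_nonneg d f : (forall i, (i < d)%nat -> 0 <= f i) -> 0 <= sumd d f.
Proof.
  induction d; simpl; intros H; [lra|].
  assert (0 <= sumd d f) by (apply IHd; auto). assert (0 <= f d) by auto. lra.
Qed.

Lemma is_derive_sumd d (F : nat -> R -> R) dF x :
  (forall i, (i < d)%nat -> is_derive (F i) x (dF i)) ->
  is_derive (fun y => sumd d (fun i => F i y)) x (sumd d dF).
Proof.
  induction d; simpl; intros H.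
  - apply isd_const.
  - apply isd_plus; auto.
Qed.

Lemma continuous_sumd d (F : nat -> R -> R) x :
  (forall i, (i < d)%nat -> continuous (F i) x) ->
  continuous (fun y => sumd d (fun i => F i y)) x.
Proof.
  induction d; simpl; intros H.
  - apply continuous_const.
  - apply (continuous_plus (fun y => sumd d (fun i => F i y)) (F d)); auto.
Qed.

Lemma CS_sumd d a b : 0 < sumd d (fun i => a i ^ 2) ->
  (sumd d (fun i => a i * b i)) ^ 2 <= sumd d (fun i => a i ^ 2) * sumd d (fun i => b i ^ 2).
Proof.
  intros HA. set (A := sumd d (fun i => a i ^ 2)) in *.
  set (C := sumd d (fun i => a i * b i)). set (B := sumd d (fun i => b i ^ 2)).
  set (lam := C / A).
  assert (H : 0 <= sumd d (fun i => (lam * a i - b i) ^ 2)).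
  { apply sumd_nonneg. intros; apply pow2_ge_0. }
  assert (E : sumd d (fun i => (lam * a i - b i) ^ 2) = lam ^ 2 * A + (-2 * lam) * C + B).
  { unfold A, B, C. rewrite <- !sumd_scal, <- !sumd_plus. apply sumd_ext. intros; ring. }
  rewrite E in H. unfold lam in H.
  assert (H2 : 0 <= (C / A) ^ 2 * A + -2 * (C / A) * C + B) by exact H.
  replace ((C / A) ^ 2 * A + -2 * (C / A) * C + B) with (B - C^2 / A) in H2 by (field; lra).
  assert (H3 : C ^ 2 / A <= B) by lra.
  apply (Rmult_le_compat_r A) in H3; [|lra].
  replace (C ^ 2 / A * A) with (C^2) in H3 by (field; lra). lra.
Qed.

Lemma Ck_const k tstar c : Ck k tstar (fun _ _ => c).
Proof.
  revert c; induction k; intros c.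
  - intros t s Ht. apply continuous_const.
  - split. { intros t s Ht. apply continuous_const. }
    split. { intros t s Ht. split; [apply (ex_derive_const c t) | apply (ex_derive_const c s)]. }
    split.
    + apply (Ck_ext _ _ (fun _ _ => 0)); [|apply IHk]. intros t s _. unfold dt.
      symmetry; apply Derive_const.
    + apply (Ck_ext _ _ (fun _ _ => 0)); [|apply IHk]. intros t s _. unfold ds.
      symmetry; apply Derive_const.
Qed.
Lemma smooth_const tstar c : smooth tstar (fun _ _ => c).
Proof. intros k; apply Ck_const. Qed.

Lemma smooth_sumd tstar d (F : nat -> R -> R -> R) :
  (forall i, (i < d)%nat -> smooth tstar (F i)) ->
  smooth tstar (fun t s => sumd d (fun i => F i t s)).
Proof.
  induction d; simpl; intros H.
  - apply smooth_const.
  - apply (smooth_plus _ (fun t s => sumd d (fun i => F i t s)) (F d)); auto.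
Qed.

Lemma smooth_minus tstar f g : smooth tstar f -> smooth tstar g ->
  smooth tstar (fun t s => f t s - g t s).
Proof.
  intros Hf Hg. apply (smooth_ext _ (fun t s => f t s + (-1) * g t s)).
  intros; ring. apply smooth_plus; auto. apply smooth_mult; auto. apply smooth_const.
Qed.

Lemma smooth_isd_t tstar f t s : smooth tstar f -> in_time tstar t ->
  is_derive (fun u => f u s) t (dt f t s).
Proof. intros H Ht. apply Derive_correct. apply (smooth_ex_dt _ _ _ _ H Ht). Qed.
Lemma smooth_isd_s tstar f t s : smooth tstar f -> in_time tstar t ->
  is_derive (fun v => f t v) s (ds f t s).
Proof. intros H Ht. apply Derive_correct. apply (smooth_ex_ds _ _ _ _ H Ht). Qed.

Lemma Derive_periodic (g : R -> R) s : (forall v, g (v + 1) = g v) ->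
  Derive g (s + 1) = Derive g s.
Proof.
  intros H. unfold Derive. f_equal. apply Lim_ext. intros h.
  replace (s + 1 + h) with ((s + h) + 1) by ring. rewrite !H. reflexivity.
Qed.
Lemma periodic_ds f : periodic1 f -> periodic1 (ds f).
Proof. intros H t s. unfold ds. apply Derive_periodic. intros v; apply H. Qed.
Lemma periodic_dt f : periodic1 f -> periodic1 (dt f).
Proof. intros H t s. unfold dt. apply Derive_ext. intros u; apply H. Qed.
Lemma periodic_mult f g : periodic1 f -> periodic1 g -> periodic1 (fun t s => f t s * g t s).
Proof. intros Hf Hg t s. rewrite Hf, Hg. reflexivity. Qed.

Ltac toR := match goal with |- ?a = ?b => change (@eq R a b) end.

Lemma RInt_exact_deriv (V W : R -> R) a b : a <= b ->
  (forall x, a <= x <= b -> is_derive V x (W x)) ->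
  (forall x, a <= x <= b -> continuous W x) ->
  RInt W a b = V b - V a.
Proof.
  intros Hab HV HW. apply is_RInt_unique.
  apply (is_RInt_derive V W a b).
  - intros x Hx. rewrite Rmin_left, Rmax_right in Hx by lra. auto.
  - intros x Hx. rewrite Rmin_left, Rmax_right in Hx by lra. auto.
Qed.

Lemma ex_RInt_cont (g : R -> R) a b : a <= b ->
  (forall x, a <= x <= b -> continuous g x) -> ex_RInt g a b.
Proof.
  intros Hab H. apply (ex_RInt_continuous g). intros z Hz.
  rewrite Rmin_left, Rmax_right in Hz by lra. auto.
Qed.

Lemma RInt_pos_point (g : R -> R) a b c : a < b -> a <= c <= b ->
  (forall x, a <= x <= b -> continuous g x) ->
  (forall x, a <= x <= b -> 0 <= g x) -> 0 < g c -> 0 < RInt g a b.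
Proof.
  intros Hab Hc Hcont Hpos Hgc.
  assert (Hcc := Hcont c Hc).
  assert (Hl : locally c (fun x => g c / 2 < g x)).
  { apply Hcc. exists (mkposreal (g c / 2) ltac:(lra)). intros y Hy.
    unfold ball in Hy; simpl in Hy; unfold AbsRing_ball in Hy; simpl in Hy.
    unfold abs, minus, plus, opp in Hy; simpl in Hy. apply Rabs_def2 in Hy. lra. }
  destruct Hl as [del Hd].
  set (a' := Rmax a (c - del / 2)). set (b' := Rmin b (c + del / 2)).
  assert (Hdel := cond_pos del).
  assert (Ha'1 : a <= a') by apply Rmax_l.
  assert (Hb'1 : b' <= b) by apply Rmin_l.
  assert (Ha'2 : a' <= c) by (apply Rmax_lub; lra).
  assert (Hb'2 : c <= b') by (apply Rmin_glb; lra).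
  assert (Hab' : a' < b').
  { destruct (Rle_lt_dec a' b') as [h|h]; [|lra].
    destruct h as [h|h]; auto. exfalso.
    assert (a' = c /\ b' = c) as [E1 E2] by lra.
    unfold a' in E1; unfold b' in E2.
    destruct (Rmax_Rle a (c - del/2) c) as [_ H1].
    assert (c = a \/ c - del/2 = c).
    { unfold Rmax in E1. destruct (Rle_dec a (c - del / 2)); [right|left]; lra. }
    assert (c = b \/ c + del/2 = c).
    { unfold Rmin in E2. destruct (Rle_dec b (c + del / 2)); [left|right]; lra. }
    lra. }
  assert (Hin : forall x, a' <= x <= b' -> Rabs (x - c) < del).
  { intros x Hx. assert (c - del/2 <= a') by apply Rmax_r.
    assert (b' <= c + del/2) by apply Rmin_r. apply Rabs_def1; lra. }
  assert (E1 : ex_RInt g a a') by (apply ex_RInt_cont; auto; intros; apply Hcont; lra).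
  assert (E2 : ex_RInt g a' b') by (apply ex_RInt_cont; try lra; intros; apply Hcont; lra).
  assert (E3 : ex_RInt g b' b) by (apply ex_RInt_cont; auto; intros; apply Hcont; lra).
  rewrite <- (RInt_Chasles g a a' b) by (auto; apply (ex_RInt_Chasles g a' b' b); auto).
  rewrite <- (RInt_Chasles g a' b' b) by auto.
  assert (I1 : 0 <= RInt g a a') by (apply RInt_ge_0; auto; intros; apply Hpos; lra).
  assert (I3 : 0 <= RInt g b' b) by (apply RInt_ge_0; auto; intros; apply Hpos; lra).
  assert (I2 : 0 < RInt g a' b').
  { apply RInt_gt_0; auto.
    - intros x Hx. assert (g c / 2 < g x) by (apply Hd; apply Hin; lra). lra.
    - intros; apply Hcont; lra. }
  change (plus (RInt g a a') (plus (RInt g a' b') (RInt g b' b))) with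
    (RInt g a a' + (RInt g a' b' + RInt g b' b)). lra.
Qed.

Lemma deriv_at_min (f : R -> R) a b c l : a < c < b ->
  (forall x, a < x < b -> f c <= f x) -> is_derive f c l -> l = 0.
Proof.
  intros Hc Hmin Hd. apply is_derive_Reals in Hd.
  destruct (Rtotal_order l 0) as [Hl|[Hl|Hl]]; auto; exfalso.
  - destruct (Hd (- l) ltac:(lra)) as [del Hdel].
    set (h := Rmin (del / 2) ((b - c) / 2)).
    assert (Hdp := cond_pos del).
    assert (h1 : h <= del / 2) by apply Rmin_l. assert (h2 : h <= (b - c)/2) by apply Rmin_r.
    assert (h3 : 0 < h) by (apply Rmin_glb_lt; lra).
    assert (Hq := Hdel h ltac:(lra) ltac:(rewrite Rabs_right; lra)).
    assert (f c <= f (c + h)) by (apply Hmin; lra).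
    assert (0 <= (f (c + h) - f c) / h) by (apply Rdiv_le_0_compat; lra).
    apply Rabs_def2 in Hq. lra.
  - destruct (Hd l ltac:(lra)) as [del Hdel].
    set (h := Rmin (del / 2) ((c - a) / 2)).
    assert (Hdp := cond_pos del).
    assert (h1 : h <= del / 2) by apply Rmin_l. assert (h2 : h <= (c - a)/2) by apply Rmin_r.
    assert (h3 : 0 < h) by (apply Rmin_glb_lt; lra).
    assert (Hq := Hdel (- h) ltac:(lra) ltac:(rewrite Rabs_left; lra)).
    assert (f c <= f (c + - h)) by (apply Hmin; lra).
    assert ((f (c + - h) - f c) / (- h) <= 0).
    { unfold Rdiv. rewrite <- Ropp_inv_permute by lra.
      assert (0 < / h) by (apply Rinv_0_lt_compat; lra). nra. }
    apply Rabs_def2 in Hq. lra.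
Qed.

Lemma deriv2_at_min (f df : R -> R) a b c l : a < c < b ->
  (forall x, a < x < b -> f c <= f x) ->
  (forall x, a < x < b -> is_derive f x (df x)) ->
  is_derive df c l -> 0 <= l.
Proof.
  intros Hc Hmin Hf Hdf.
  assert (H0 : df c = 0) by (apply (deriv_at_min f a b c); auto).
  destruct (Rle_lt_dec 0 l) as [|Hl]; auto; exfalso.
  apply is_derive_Reals in Hdf.
  destruct (Hdf (- l / 2) ltac:(lra)) as [del Hdel].
  set (h := Rmin (del / 2) ((b - c) / 2)).
  assert (Hdp := cond_pos del).
  assert (h1 : h <= del / 2) by apply Rmin_l. assert (h2 : h <= (b - c)/2) by apply Rmin_r.
  assert (h3 : 0 < h) by (apply Rmin_glb_lt; lra).
  assert (Hneg : forall y, 0 < y <= h -> df (c + y) < 0).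
  { intros y Hy. assert (Hq := Hdel y ltac:(lra) ltac:(rewrite Rabs_right; lra)).
    rewrite H0 in Hq. apply Rabs_def2 in Hq.
    assert (Hq2 : df (c + y) / y < 0) by (unfold Rminus in Hq; lra).
    unfold Rdiv in Hq2. assert (0 < / y) by (apply Rinv_0_lt_compat; lra).
    destruct (Rle_lt_dec 0 (df (c + y))); auto. nra. }
  destruct (MVT_cor2 f df c (c + h)) as [x [Hx1 Hx2]]; [lra| |].
  - intros x Hx. apply is_derive_Reals. apply Hf. lra.
  - assert (df x < 0) by (replace x with (c + (x - c)) by ring; apply Hneg; lra).
    assert (f c <= f (c + h)) by (apply Hmin; lra).
    assert (df x * (c + h - c) < 0) by (apply Rmult_neg_pos; lra). lra.
Qed.

Lemma RInt_plusR (f g : R -> R) a b : ex_RInt f a b -> ex_RInt g a b ->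
  RInt (fun x => f x + g x) a b = RInt f a b + RInt g a b.
Proof. intros Hf Hg. exact (RInt_plus f g a b Hf Hg). Qed.
Lemma RInt_scalR (f : R -> R) k a b : ex_RInt f a b ->
  RInt (fun x => k * f x) a b = k * RInt f a b.
Proof. intros Hf. exact (RInt_scal f a b k Hf). Qed.
Lemma RInt_constR (c a b : R) : RInt (fun _ => c) a b = (b - a) * c.
Proof. exact (RInt_const a b c). Qed.

Lemma isd_sq (f : R -> R) (x l : R) : is_derive f x l ->
  is_derive (fun y => f y ^ 2) x (2 * f x * l).
Proof.
  intros H. apply (isd_ext (fun y => f y * f y)). { intros y. change (f y * f y = f y ^ 2). ring. }
  eapply isd_val. { apply isd_mult; eauto. } ring.
Qed.

Lemma sigma_nonneg tstar sigma (c2 : R -> R -> R) t P K :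
  smooth tstar sigma -> periodic1 sigma -> smooth tstar c2 -> in_time tstar t -> 0 < P ->
  (forall s, 0 <= c2 t s) ->
  (forall s, ds (ds sigma) t s - / P * sigma t s * c2 t s = - / P * K) ->
  RInt (fun s => sigma t s) 0 1 = 1 ->
  forall s, 0 <= s <= 1 -> 0 <= sigma t s.
Proof.
  intros Hs Hper Hc Ht HP Hc2 Heq Hint.
  set (f := fun s => sigma t s).
  assert (Hfc : forall x, continuous f x) by (intros; apply (smooth_cont_s _ _ _ _ Hs Ht)).
  destruct (continuity_ab_min f 0 1) as [s0 [Hmin Hs0]]; [lra| |].
  { intros c _. apply continuity_pt_filterlim. apply Hfc. }
  intros s1 Hs1. assert (f s0 <= f s1) by (apply Hmin; auto).
  destruct (Rle_lt_dec 0 (f s0)) as [H0|Hneg]; [unfold f in *; lra|]. exfalso.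
  assert (Hmin2 : forall x, -1 < x < 2 -> f s0 <= f x).
  { intros x Hx. destruct (Rle_lt_dec 0 x).
    - destruct (Rle_lt_dec x 1). apply Hmin; lra.
      replace (f x) with (f (x - 1)). apply Hmin; lra.
      unfold f. replace x with ((x - 1) + 1) at 2 by ring. symmetry; apply Hper.
    - replace (f x) with (f (x + 1)). apply Hmin; lra. unfold f. apply Hper. }
  assert (Hdd : 0 <= ds (ds sigma) t s0).
  { apply (deriv2_at_min f (ds sigma t) (-1) 2 s0); [lra|exact Hmin2| |].
    - intros x _. apply (smooth_isd_s _ _ _ _ Hs Ht).
    - apply (smooth_isd_s _ _ _ _ (smooth_ds _ _ Hs) Ht). }
  assert (HK : K <= sigma t s0 * c2 t s0).
  { specialize (Heq s0). assert (0 < / P) by (apply Rinv_0_lt_compat; lra).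
    assert (E : / P * (sigma t s0 * c2 t s0 - K) >= 0) by (rewrite Rmult_minus_distr_l; lra).
    destruct (Rle_lt_dec K (sigma t s0 * c2 t s0)); auto.
    assert (/ P * (sigma t s0 * c2 t s0 - K) < 0) by (apply Rmult_pos_neg; lra). lra. }
  assert (HK0 : K <= 0).
  { assert (0 <= c2 t s0) by apply Hc2. unfold f in Hneg. nra. }
  set (E := fun s => / P * sigma t s ^ 2 * c2 t s + ds sigma t s ^ 2).
  assert (Hsm1 := smooth_ds _ _ Hs). assert (Hsm2 := smooth_ds _ _ Hsm1).
  assert (HEc : forall x, continuous E x).
  { intros x. unfold E.
    apply (continuous_plus (fun s => / P * sigma t s ^ 2 * c2 t s) (fun s => ds sigma t s ^ 2)).
    - apply (continuous_mult (fun s => / P * sigma t s ^ 2) (fun s => c2 t s)).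
      apply (continuous_mult (fun s => / P) (fun s => sigma t s ^ 2)). apply continuous_const.
      apply (continuous_ext (fun s => sigma t s * sigma t s)). intros; simpl; ring.
      apply (continuous_mult (fun s => sigma t s) (fun s => sigma t s)); apply (smooth_cont_s _ _ _ _ Hs Ht).
      apply (smooth_cont_s _ _ _ _ Hc Ht).
    - apply (continuous_ext (fun s => ds sigma t s * ds sigma t s)). intros; simpl; ring.
      apply (continuous_mult (fun s => ds sigma t s) (fun s => ds sigma t s)); apply (smooth_cont_s _ _ _ _ Hsm1 Ht). }
  assert (HEint : RInt E 0 1 = / P * K).
  { assert (Hpt : forall s, E s = ds (fun u v => sigma u v * ds sigma u v) t s + / P * K * sigma t s).
    { intros s. unfold E, ds at 2. cbv beta.
      rewrite (Derive_mult (fun v => sigma t v) (fun v => ds sigma t v)).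
      2: apply (smooth_ex_ds _ _ _ _ Hs Ht). 2: apply (smooth_ex_ds _ _ _ _ Hsm1 Ht).
      specialize (Heq s). fold (ds sigma t s). fold (ds (ds sigma) t s).
      replace (ds (ds sigma) t s) with (/ P * sigma t s * c2 t s - / P * K) by lra. ring. }
    rewrite (RInt_ext E (fun s => ds (fun u v => sigma u v * ds sigma u v) t s + / P * K * sigma t s))
      by (intros; apply Hpt).
    assert (Hsm3 : smooth tstar (fun u v => sigma u v * ds sigma u v)) by (apply smooth_mult; auto).
    assert (Hsm4 := smooth_ds _ _ Hsm3).
    assert (HA : ex_RInt (ds (fun u v => sigma u v * ds sigma u v) t) 0 1).
    { apply ex_RInt_cont; [lra| intros; apply (smooth_cont_s _ _ _ _ Hsm4 Ht)]. }
    assert (HB : ex_RInt (fun s => / P * K * sigma t s) 0 1).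
    { apply ex_RInt_cont; [lra|]. intros.
      apply (continuous_mult (fun _ => / P * K) (fun s => sigma t s)).
      apply continuous_const. apply (smooth_cont_s _ _ _ _ Hs Ht). }
    rewrite (RInt_plusR _ _ 0 1 HA HB).
    rewrite (RInt_exact_deriv (fun s => sigma t s * ds sigma t s)) by
      (try lra; intros; first [apply (smooth_isd_s _ _ _ _ Hsm3 Ht) | apply (smooth_cont_s _ _ _ _ Hsm4 Ht)]).
    rewrite (RInt_scalR (fun s => sigma t s)).
    2: apply ex_RInt_cont; [lra| intros; apply (smooth_cont_s _ _ _ _ Hs Ht)].
    rewrite Hint. replace 1 with (0 + 1) at 1 2 by ring. rewrite Hper, (periodic_ds _ Hper).
    toR; ring. }
  assert (HE0 : forall x, 0 <= E x).
  { intros x. unfold E. assert (0 <= c2 t x) by apply Hc2.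
    assert (0 <= / P) by (left; apply Rinv_0_lt_compat; lra).
    assert (0 <= sigma t x ^ 2) by apply pow2_ge_0. assert (0 <= ds sigma t x ^ 2) by apply pow2_ge_0.
    assert (0 <= / P * sigma t x ^ 2 * c2 t x) by (apply Rmult_le_pos; [apply Rmult_le_pos|]; auto).
    lra. }
  assert (Hds0 : forall x, 0 <= x <= 1 -> ds sigma t x = 0).
  { intros x Hx. destruct (Req_dec (ds sigma t x) 0) as [|Hne]; auto. exfalso.
    assert (0 < RInt E 0 1).
    { apply (RInt_pos_point E 0 1 x); auto; try lra.
      unfold E. assert (0 < ds sigma t x ^ 2) by (apply pow2_gt_0; auto).
      assert (0 <= c2 t x) by apply Hc2.
      assert (0 <= / P) by (left; apply Rinv_0_lt_compat; lra).
      assert (0 <= sigma t x ^ 2) by apply pow2_ge_0.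
      assert (0 <= / P * sigma t x ^ 2 * c2 t x) by (apply Rmult_le_pos; [apply Rmult_le_pos|]; auto).
      lra. }
    assert (/ P * K <= 0).
    { assert (0 < / P) by (apply Rinv_0_lt_compat; lra). nra. }
    lra. }
  assert (Hconst : forall x, 0 <= x <= 1 -> f x = f 0).
  { intros x Hx. 
    assert (R0 : RInt (ds sigma t) 0 x = f x - f 0).
    { apply (RInt_exact_deriv f (ds sigma t) 0 x). lra.
      intros; apply (smooth_isd_s _ _ _ _ Hs Ht). intros; apply (smooth_cont_s _ _ _ _ Hsm1 Ht). }
    rewrite (RInt_ext (ds sigma t) (fun _ => 0)) in R0.
    2: { intros y Hy. rewrite Rmin_left in Hy by lra. rewrite Rmax_right in Hy by lra. apply Hds0. lra. }
    rewrite RInt_const in R0. change (scal (x - 0) 0) with ((x - 0) * 0) in R0. lra. }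
  assert (f 0 = 1).
  { rewrite <- Hint. fold f. rewrite (RInt_ext f (fun _ => f 0)).
    2: { intros y Hy. rewrite Rmin_left in Hy by lra. rewrite Rmax_right in Hy by lra. apply Hconst. lra. }
    rewrite RInt_const. change (scal (1 - 0) (f 0)) with ((1 - 0) * f 0). ring. }
  rewrite Hconst in Hneg by lra. lra.
Qed.

Lemma sumd_comb3 d F G1 G2 G3 c1 c2 c3 :
  (forall i, (i < d)%nat -> F i = c1 * G1 i + c2 * G2 i + c3 * G3 i) ->
  sumd d F = c1 * sumd d G1 + c2 * sumd d G2 + c3 * sumd d G3.
Proof.
  induction d; simpl; intros H; [ring|]. rewrite IHd by auto. rewrite H by auto. ring.
Qed.

Lemma isd_unique2 (f : R -> R) (x a b : R) : is_derive f x a -> is_derive f x b -> a = b.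
Proof.
  intros Ha Hb. apply is_derive_unique in Ha. apply is_derive_unique in Hb. congruence.
Qed.

Lemma smooth_sq tstar f : smooth tstar f -> smooth tstar (fun t s => f t s ^ 2).
Proof.
  intros H. apply (smooth_ext _ (fun t s => f t s * f t s)). intros; simpl; ring.
  apply smooth_mult; auto.
Qed.

Lemma vnorm2_nonneg d v : 0 <= vnorm2 d v.
Proof. apply sumd_nonneg. intros; apply pow2_ge_0. Qed.

Theorem proposition2p5 (d : nat) (tstar : Rbar) (eta : nat -> R -> R -> R)
    (sigma : R -> R -> R) :
  (2 <= d)%nat ->
  UCCSF d tstar eta sigma ->
  forall t, in_time tstar t ->
    is_derive (curve_length d eta) t
      (- / (curve_length d eta t ^ 3) *
         RInt (fun s => sigma t s * curv2 d eta t s) 0 1) /\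
    ex_derive_n (fun u => curve_length d eta u ^ 2) 2 t /\
    0 <= Derive_n (fun u => curve_length d eta u ^ 2) 2 t.
Proof.
  intros _ HU t Ht. cbv zeta in HU.
  destruct HU as [Heta [Hs [Hsp Hflow]]].
  set (L := curve_length d eta).
  set (K := fun u => RInt (fun s => sigma u s * curv2 d eta u s) 0 1).
  change (RInt (fun s => sigma t s * curv2 d eta t s) 0 1) with (K t).
  assert (Hsmi : forall i, (i < d)%nat -> smooth tstar (eta i)) by (intros; apply Heta; auto).
  assert (Hperi : forall i, (i < d)%nat -> periodic1 (eta i)) by (intros; apply Heta; auto).
  assert (HLpos : forall u, in_time tstar u -> 0 < L u) by (intros u Hu; apply (Hflow u Hu)).
  assert (HPpos : forall u, in_time tstar u -> 0 < L u ^ 2) by (intros u Hu; apply pow_lt; auto).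
  assert (S1 : forall u s, in_time tstar u -> vnorm2 d (fun i => ds (eta i) u s) = L u ^ 2).
  { intros u s Hu. destruct (Hflow u Hu) as [_ [_ [Hn _]]]. fold L in Hn. rewrite <- (Hn s).
    unfold vnorm. rewrite pow2_sqrt; auto. apply vnorm2_nonneg. }
  assert (S2 : forall u s, in_time tstar u ->
     sumd d (fun i => ds (eta i) u s * ds (ds (eta i)) u s) = 0).
  { intros u s Hu.
    assert (D1 : is_derive (fun v => vnorm2 d (fun i => ds (eta i) u v)) s
                  (sumd d (fun i => 2 * ds (eta i) u s * ds (ds (eta i)) u s))).
    { apply (is_derive_sumd d (fun i v => ds (eta i) u v ^ 2)). intros i Hi.
      apply isd_sq. apply (smooth_isd_s _ _ _ _ (smooth_ds _ _ (Hsmi i Hi)) Hu). }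
    assert (D2 : is_derive (fun v => vnorm2 d (fun i => ds (eta i) u v)) s 0).
    { apply (isd_ext (fun _ => L u ^ 2)). intros v; rewrite S1; auto. apply isd_const. }
    pose proof (isd_unique2 _ _ _ _ D1 D2) as E.
    rewrite (sumd_ext d _ (fun i => 2 * (ds (eta i) u s * ds (ds (eta i)) u s))) in E
      by (intros; ring).
    rewrite sumd_scal in E. lra. }
  assert (S3 : forall u s, in_time tstar u ->
     sumd d (fun i => ds (ds (eta i)) u s ^ 2 + ds (eta i) u s * ds (ds (ds (eta i))) u s) = 0).
  { intros u s Hu.
    assert (D1 : is_derive (fun v => sumd d (fun i => ds (eta i) u v * ds (ds (eta i)) u v)) s
       (sumd d (fun i => ds (ds (eta i)) u s ^ 2 + ds (eta i) u s * ds (ds (ds (eta i))) u s))).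
    { apply (is_derive_sumd d (fun i v => ds (eta i) u v * ds (ds (eta i)) u v)). intros i Hi.
      eapply isd_val. apply isd_mult.
      apply (smooth_isd_s _ _ _ _ (smooth_ds _ _ (Hsmi i Hi)) Hu).
      apply (smooth_isd_s _ _ _ _ (smooth_ds _ _ (smooth_ds _ _ (Hsmi i Hi))) Hu). simpl; ring. }
    assert (D2 : is_derive (fun v => sumd d (fun i => ds (eta i) u v * ds (ds (eta i)) u v)) s 0).
    { apply (isd_ext (fun _ => 0)). intros v; rewrite S2; auto. apply isd_const. }
    exact (isd_unique2 _ _ _ _ D1 D2). }
  assert (S4 : forall u s, in_time tstar u ->
     is_derive (fun w => L w ^ 2) u (sumd d (fun i => 2 * ds (eta i) u s * dt (ds (eta i)) u s))).
  { intros u s Hu.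
    apply (is_derive_ext_loc (fun w => vnorm2 d (fun i => ds (eta i) w s))).
    { generalize (in_time_loc _ _ Hu). apply filter_imp. intros w Hw. apply S1; auto. }
    apply (is_derive_sumd d (fun i w => ds (eta i) w s ^ 2)). intros i Hi.
    apply (isd_sq (fun w => ds (eta i) w s)). apply (smooth_isd_t _ _ _ _ (smooth_ds _ _ (Hsmi i Hi)) Hu). }
  set (hh := fun i u s => sigma u s * ds (eta i) u s).
  assert (Hhs : forall i, (i < d)%nat -> smooth tstar (hh i)).
  { intros i Hi. apply smooth_mult; auto. apply smooth_ds; auto. }
  assert (S5 : forall i u s, (i < d)%nat -> in_time tstar u ->
     dt (eta i) u s = / (L u ^ 2) * ds (hh i) u s).
  { intros i u s Hi Hu. destruct (Hflow u Hu) as [_ [_ [_ [He _]]]]. apply He; auto. }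
  assert (S7 : forall i u s, (i < d)%nat -> in_time tstar u ->
     ds (hh i) u s = ds sigma u s * ds (eta i) u s + sigma u s * ds (ds (eta i)) u s).
  { intros i u s Hi Hu. unfold hh, ds at 1. cbv beta.
    apply (Derive_mult (fun v => sigma u v) (fun v => ds (eta i) u v)).
    apply (smooth_ex_ds _ _ _ _ Hs Hu). apply (smooth_ex_ds _ _ _ _ (smooth_ds _ _ (Hsmi i Hi)) Hu). }
  assert (S8 : forall i u s, (i < d)%nat -> in_time tstar u ->
     ds (ds (hh i)) u s = ds (ds sigma) u s * ds (eta i) u s
        + 2 * ds sigma u s * ds (ds (eta i)) u s + sigma u s * ds (ds (ds (eta i))) u s).
  { intros i u s Hi Hu. unfold ds at 1.
    rewrite (Derive_ext (fun v => ds (hh i) u v)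
       (fun v => ds sigma u v * ds (eta i) u v + sigma u v * ds (ds (eta i)) u v))
      by (intros; apply S7; auto).
    apply is_derive_unique. eapply isd_val. apply isd_plus; apply isd_mult.
    apply (smooth_isd_s _ _ _ _ (smooth_ds _ _ Hs) Hu).
    apply (smooth_isd_s _ _ _ _ (smooth_ds _ _ (Hsmi i Hi)) Hu).
    apply (smooth_isd_s _ _ _ _ Hs Hu).
    apply (smooth_isd_s _ _ _ _ (smooth_ds _ _ (smooth_ds _ _ (Hsmi i Hi))) Hu).
    simpl; ring. }
  assert (S9 : forall i u s, (i < d)%nat -> in_time tstar u ->
     dt (ds (eta i)) u s = / (L u ^ 2) * ds (ds (hh i)) u s).
  { intros i u s Hi Hu. rewrite (smooth_schwarz _ _ _ _ (Hsmi i Hi) Hu).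
    unfold ds at 1. rewrite (Derive_ext (fun v => dt (eta i) u v)
       (fun v => / (L u ^ 2) * ds (hh i) u v)) by (intros; apply S5; auto).
    apply Derive_scal. }
  assert (S10 : forall u, in_time tstar u ->
     is_derive (fun w => L w ^ 2) u (-2 / (L u ^ 2) * K u)).
  { intros u Hu. eapply isd_val. apply (S4 u 0 Hu).
    destruct (Hflow u Hu) as [_ [_ [_ [_ [Hsig _]]]]]. specialize (Hsig 0). fold L in Hsig.
    rewrite (sumd_comb3 d _ (fun i => ds (eta i) u 0 ^ 2)
              (fun i => ds (eta i) u 0 * ds (ds (eta i)) u 0)
              (fun i => ds (eta i) u 0 * ds (ds (ds (eta i))) u 0)
              (2 / (L u ^ 2) * ds (ds sigma) u 0) (4 / (L u ^ 2) * ds sigma u 0)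
              (2 / (L u ^ 2) * sigma u 0)).
    2: { intros i Hi. rewrite S9, S8 by auto. assert (HL := HLpos u Hu). field. lra. }
    rewrite S2 by auto.
    assert (E3 := S3 u 0 Hu). rewrite sumd_plus in E3.
    assert (Ec : sumd d (fun i => ds (ds (eta i)) u 0 ^ 2) = curv2 d eta u 0) by reflexivity.
    assert (E1 := S1 u 0 Hu). unfold vnorm2 in E1. rewrite E1.
    replace (sumd d (fun i => ds (eta i) u 0 * ds (ds (ds (eta i))) u 0)) with (- curv2 d eta u 0) by lra.
    unfold K. assert (HP := HLpos u Hu).
    replace (ds (ds sigma) u 0) with (/ (L u ^ 2) * sigma u 0 * curv2 d eta u 0 - / (L u ^ 2) * RInt (fun s : R => sigma u s * curv2 d eta u s) 0 1) by lra.
    field. lra. }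
  assert (PartI : is_derive L t (- / (L t ^ 3) * K t)).
  { apply (is_derive_ext_loc (fun w => sqrt (L w ^ 2))).
    { generalize (in_time_loc _ _ Ht). apply filter_imp. intros w Hw.
      apply sqrt_pow2. left; auto. }
    eapply isd_val. apply is_derive_sqrt. apply (S10 t Ht). apply HPpos; auto.
    cbv beta. rewrite sqrt_pow2 by (left; auto). assert (HL := HLpos t Ht). toR. field. lra. }
  split; [exact PartI|].
  set (P := L t ^ 2). assert (HP : 0 < P) by (apply HPpos; auto).
  assert (HL := HLpos t Ht).
  set (Pp := -2 / P * K t).
  set (G := fun s w => sumd d (fun i => 2 * ds (eta i) w s * dt (ds (eta i)) w s)).
  set (D2 := fun s => sumd d (fun i => 2 * (dt (ds (eta i)) t s * dt (ds (eta i)) t s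
                     + ds (eta i) t s * dt (dt (ds (eta i))) t s))).
  assert (HDP : forall s, locally t (fun w => G s w = Derive (fun u => L u ^ 2) w)).
  { intros s. generalize (in_time_loc _ _ Ht). apply filter_imp. intros w Hw.
    symmetry. apply is_derive_unique. apply S4; auto. }
  assert (HGd : forall s, is_derive (G s) t (D2 s)).
  { intros s. unfold G, D2.
    apply (is_derive_sumd d (fun i w => 2 * ds (eta i) w s * dt (ds (eta i)) w s)).
    intros i Hi. eapply isd_val. apply isd_mult.
    apply (isd_scal (fun w => ds (eta i) w s)).
    apply (smooth_isd_t _ _ _ _ (smooth_ds _ _ (Hsmi i Hi)) Ht).
    apply (smooth_isd_t _ _ _ _ (smooth_dt _ _ (smooth_ds _ _ (Hsmi i Hi))) Ht).
    simpl. ring. }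
  assert (HD2 : forall s, Derive_n (fun u => L u ^ 2) 2 t = D2 s).
  { intros s. change (Derive (Derive (fun u => L u ^ 2)) t = D2 s).
    rewrite (Derive_ext_loc (Derive (fun u => L u ^ 2)) (G s)).
    apply is_derive_unique, HGd.
    generalize (HDP s). apply filter_imp. intros w Hw; symmetry; exact Hw. }
  assert (HexD : ex_derive_n (fun u => L u ^ 2) 2 t).
  { change (ex_derive (Derive (fun u => L u ^ 2)) t).
    apply (ex_derive_ext_loc (G 0)). apply HDP. exists (D2 0). apply HGd. }
  split; [exact HexD|].
  assert (HSw : forall i s, (i < d)%nat -> dt (ds (ds (hh i))) t s = ds (ds (dt (hh i))) t s).
  { intros i s Hi. rewrite (smooth_schwarz tstar (ds (hh i)) t s); auto. 2: apply smooth_ds; auto.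
    change (Derive (fun v => dt (ds (hh i)) t v) s = Derive (fun v => ds (dt (hh i)) t v) s).
    apply Derive_ext. intros v. apply (smooth_schwarz tstar); auto. }
  assert (Hddsh : forall i s, (i < d)%nat -> ds (ds (hh i)) t s = P * dt (ds (eta i)) t s).
  { intros i s Hi. rewrite S9 by auto. fold P. field. lra. }
  assert (HA : forall i s, (i < d)%nat -> dt (dt (ds (eta i))) t s =
       - (Pp / P) * dt (ds (eta i)) t s + / P * ds (ds (dt (hh i))) t s).
  { intros i s Hi. unfold dt at 1.
    rewrite (Derive_ext_loc (fun w => dt (ds (eta i)) w s) (fun w => / (L w ^ 2) * ds (ds (hh i)) w s)).
    2: { generalize (in_time_loc _ _ Ht). apply filter_imp. intros w Hw. apply S9; auto. }
    apply is_derive_unique. eapply isd_val. apply isd_mult.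
    apply (is_derive_inv (fun w => L w ^ 2)). apply (S10 t Ht). fold P. lra.
    apply (smooth_isd_t _ _ _ _ (smooth_ds _ _ (smooth_ds _ _ (Hhs i Hi))) Ht).
    cbv beta. fold P. fold Pp. rewrite HSw, Hddsh by auto. field. lra. }
  assert (Hm : forall i s, (i < d)%nat -> dt (hh i) t s =
       dt sigma t s * ds (eta i) t s + sigma t s * dt (ds (eta i)) t s).
  { intros i s Hi. unfold hh, dt at 1. cbv beta.
    apply (Derive_mult (fun u => sigma u s) (fun u => ds (eta i) u s)).
    apply (smooth_ex_dt _ _ _ _ Hs Ht). apply (smooth_ex_dt _ _ _ _ (smooth_ds _ _ (Hsmi i Hi)) Ht). }
  assert (HS2 : forall s, sumd d (fun i => ds (eta i) t s * dt (ds (eta i)) t s) = Pp / 2).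
  { intros s. assert (E := isd_unique2 _ _ _ _ (S4 t s Ht) (S10 t Ht)).
    rewrite (sumd_ext d _ (fun i => 2 * (ds (eta i) t s * dt (ds (eta i)) t s))) in E
      by (intros; ring).
    rewrite sumd_scal in E. fold P in E. fold Pp in E. lra. }
  set (Nf := fun u s => sigma u s * (4 * sumd d (fun i => dt (ds (eta i)) u s ^ 2) - Pp ^ 2 / P)).
  set (Wf := fun u s => sumd d (fun i => hh i u s * ds (ds (dt (hh i))) u s
                                    - ds (ds (hh i)) u s * dt (hh i) u s)).
  assert (HPt : forall s, sigma t s * D2 s = Nf t s + Pp * dt sigma t s + 2 / P * Wf t s).
  { intros s. unfold D2, Nf, Wf.
    rewrite (sumd_comb3 d _ (fun i => dt (ds (eta i)) t s ^ 2)
              (fun i => ds (eta i) t s * dt (ds (eta i)) t s)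
              (fun i => ds (eta i) t s * ds (ds (dt (hh i))) t s)
              2 (-2 * Pp / P) (2 / P)).
    2: { intros i Hi. rewrite HA by auto. field. lra. }
    rewrite (sumd_comb3 d (fun i => hh i t s * ds (ds (dt (hh i))) t s
                                    - ds (ds (hh i)) t s * dt (hh i) t s)
              (fun i => dt (ds (eta i)) t s ^ 2)
              (fun i => ds (eta i) t s * dt (ds (eta i)) t s)
              (fun i => ds (eta i) t s * ds (ds (dt (hh i))) t s)
              (- P * sigma t s) (- P * dt sigma t s) (sigma t s)).
    2: { intros i Hi. cbv beta. rewrite Hddsh, Hm by auto. unfold hh. ring. }
    rewrite HS2. field. lra. }
  assert (HNs : smooth tstar Nf).
  { unfold Nf. apply (smooth_mult _ sigma (fun u s => 4 * sumd d (fun i => dt (ds (eta i)) u s ^ 2) - Pp ^ 2 / P)); auto.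
    apply (smooth_minus _ (fun u s => 4 * sumd d (fun i => dt (ds (eta i)) u s ^ 2)) (fun _ _ => Pp ^ 2 / P)).
    apply (smooth_mult _ (fun _ _ => 4) (fun u s => sumd d (fun i => dt (ds (eta i)) u s ^ 2))).
    apply smooth_const. apply (smooth_sumd _ d (fun i u s => dt (ds (eta i)) u s ^ 2)).
    intros i Hi. apply (smooth_sq _ (dt (ds (eta i)))). apply smooth_dt, smooth_ds; auto.
    apply smooth_const. }
  assert (HWs : smooth tstar Wf).
  { unfold Wf. apply (smooth_sumd _ d (fun i u s => hh i u s * ds (ds (dt (hh i))) u s
                                    - ds (ds (hh i)) u s * dt (hh i) u s)).
    intros i Hi. apply (smooth_minus _ (fun u s => hh i u s * ds (ds (dt (hh i))) u s)
                          (fun u s => ds (ds (hh i)) u s * dt (hh i) u s)).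
    - apply (smooth_mult _ (hh i) (ds (ds (dt (hh i))))); auto.
      apply smooth_ds, smooth_ds, smooth_dt; auto.
    - apply (smooth_mult _ (ds (ds (hh i))) (dt (hh i))).
      apply smooth_ds, smooth_ds; auto. apply smooth_dt; auto. }
  assert (Hc : forall f, smooth tstar f -> ex_RInt (fun s => f t s) 0 1).
  { intros f Hf. apply ex_RInt_cont; [lra|]. intros; apply (smooth_cont_s _ _ _ _ Hf Ht). }
  destruct (Hflow t Ht) as [_ [_ [_ [_ [Hsig Hint1]]]]].
  fold L in Hsig. fold P in Hsig.
  assert (HI0 : RInt (fun s => dt sigma t s) 0 1 = 0).
  { assert (D1 : is_derive (fun x => RInt (fun s => sigma x s) 0 1) t
                  (RInt (fun s => Derive (fun u => sigma u s) t) 0 1)).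
    { apply (is_derive_RInt_param sigma 0 1 t).
      - generalize (in_time_loc _ _ Ht). apply filter_imp. intros w Hw s _.
        apply (smooth_ex_dt _ _ _ _ Hs Hw).
      - intros s _. apply continuity_2d_pt_filterlim.
        exact (smooth_cont2 _ _ _ s (smooth_dt _ _ Hs) Ht).
      - generalize (in_time_loc _ _ Ht). apply filter_imp. intros w Hw.
        apply ex_RInt_cont; [lra|]. intros; apply (smooth_cont_s _ _ _ _ Hs Hw). }
    assert (D2' : is_derive (fun x => RInt (fun s => sigma x s) 0 1) t 0).
    { apply (is_derive_ext_loc (fun _ => 1)).
      generalize (in_time_loc _ _ Ht). apply filter_imp. intros w Hw.
      symmetry; apply (Hflow w Hw). apply isd_const. }
    exact (isd_unique2 _ _ _ _ D1 D2'). }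
  assert (HW0 : RInt (fun s => Wf t s) 0 1 = 0).
  { set (V := fun s => sumd d (fun i => hh i t s * ds (dt (hh i)) t s - ds (hh i) t s * dt (hh i) t s)).
    rewrite (RInt_exact_deriv V (fun s => Wf t s) 0 1); [| lra | |].
    - assert (E : V 1 = V 0).
      { unfold V. apply sumd_ext. intros i Hi.
        assert (Hph : periodic1 (hh i)) by (apply periodic_mult; auto; apply periodic_ds; auto).
        replace 1 with (0 + 1) by ring.
        rewrite Hph, (periodic_ds _ (periodic_dt _ Hph)), (periodic_ds _ Hph), (periodic_dt _ Hph).
        reflexivity. }
      rewrite E. toR; ring.
    - intros x _. unfold V, Wf.
      apply (is_derive_sumd d (fun i s => hh i t s * ds (dt (hh i)) t s - ds (hh i) t s * dt (hh i) t s)).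
      intros i Hi. eapply isd_val. apply isd_minus; apply isd_mult.
      apply (smooth_isd_s _ _ _ _ (Hhs i Hi) Ht).
      apply (smooth_isd_s _ _ _ _ (smooth_ds _ _ (smooth_dt _ _ (Hhs i Hi))) Ht).
      apply (smooth_isd_s _ _ _ _ (smooth_ds _ _ (Hhs i Hi)) Ht).
      apply (smooth_isd_s _ _ _ _ (smooth_dt _ _ (Hhs i Hi)) Ht).
      simpl. ring.
    - intros; apply (smooth_cont_s _ _ _ _ HWs Ht). }
  assert (Hc2s : smooth tstar (curv2 d eta)).
  { apply (smooth_ext _ (fun u s => sumd d (fun i => ds (ds (eta i)) u s ^ 2))).
    intros; reflexivity. apply (smooth_sumd _ d (fun i u s => ds (ds (eta i)) u s ^ 2)).
    intros i Hi. apply (smooth_sq _ (ds (ds (eta i)))). apply smooth_ds, smooth_ds; auto. }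
  assert (Hsig0 : forall x, 0 <= x <= 1 -> 0 <= sigma t x).
  { apply (sigma_nonneg tstar sigma (curv2 d eta) t P (K t)); auto.
    intros; apply vnorm2_nonneg. }
  assert (HN0 : 0 <= RInt (fun s => Nf t s) 0 1).
  { apply RInt_ge_0; [lra| apply Hc; auto |]. intros x Hx. unfold Nf.
    apply Rmult_le_pos; [apply Hsig0; lra|].
    set (S := sumd d (fun i => dt (ds (eta i)) t x ^ 2)).
    assert (Hcs := CS_sumd d (fun i => ds (eta i) t x) (fun i => dt (ds (eta i)) t x)).
    cbv beta in Hcs. assert (E1 := S1 t x Ht). unfold vnorm2 in E1. fold P in E1. rewrite E1 in Hcs.
    rewrite HS2 in Hcs. specialize (Hcs HP). fold S in Hcs.
    assert (H4 : 4 * ((Pp / 2) ^ 2) / P <= 4 * S).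
    { unfold Rdiv. apply Rmult_le_reg_r with P; auto.
      rewrite Rmult_assoc, Rinv_l by lra. nra. }
    replace (Pp ^ 2 / P) with (4 * ((Pp / 2) ^ 2) / P) by (field; lra). lra. }
  set (DD := Derive_n (fun u => L u ^ 2) 2 t).
  assert (E : DD = RInt (fun s => Nf t s + Pp * dt sigma t s + 2 / P * Wf t s) 0 1).
  { transitivity (RInt (fun s => DD * sigma t s) 0 1).
    { rewrite (RInt_scalR (fun s => sigma t s)). rewrite Hint1. toR; ring. apply Hc; auto. }
    apply RInt_ext. intros x _. rewrite <- HPt. unfold DD. rewrite (HD2 x). toR; ring. }
  rewrite (RInt_plusR (fun s => Nf t s + Pp * dt sigma t s) (fun s => 2 / P * Wf t s)) in E.
  2: apply (Hc (fun u s => Nf u s + Pp * dt sigma u s)); apply smooth_plus; auto;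
     apply (smooth_mult _ (fun _ _ => Pp) (dt sigma)); [apply smooth_const| apply smooth_dt; auto].
  2: apply (Hc (fun u s => 2 / P * Wf u s)); apply (smooth_mult _ (fun _ _ => 2 / P) Wf); auto; apply smooth_const.
  rewrite (RInt_plusR (fun s => Nf t s) (fun s => Pp * dt sigma t s)) in E.
  2: apply Hc; auto.
  2: apply (Hc (fun u s => Pp * dt sigma u s)); apply (smooth_mult _ (fun _ _ => Pp) (dt sigma)); [apply smooth_const| apply smooth_dt; auto].
  rewrite (RInt_scalR (fun s => dt sigma t s)) in E by (apply (Hc (dt sigma)); apply smooth_dt; auto).
  rewrite (RInt_scalR (fun s => Wf t s)) in E by (apply Hc; auto).
  rewrite HI0, HW0 in E. fold DD. lra.
Qed.
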